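(* Let $\lambda$ be a Perron number and let $f_\lambda:\ast_{mM}\to\ast_{mM}$ be the star map constructed below. Then its split map $S(f_\lambda):S(\ast_{mM})\to S(\ast_{mM})$ is mixing; i.e. for every edge $y_I$ of $S(\ast_{mM})$ there exists $L$ such that the edge path $S(f_\lambda)^L(y_I)$ traverses every edge of $S(\ast_{mM})$.
   Context: A Perron number is a real algebraic integer $\lambda$ with $\lambda>|\lambda_i|$ for every other Galois conjugate $\lambda_i$. Construction of $f_\lambda$: let $d=\deg\lambda$, $\mathcal{O}_\lambda$ the ring of integers of $\mathbb{Q}(\lambda)$, $V_\lambda=\mathbb{Q}(\lambda)\otimes_{\mathbb{Q}}\mathbb{R}\cong\mathbb{R}^d$, on which multiplication by $\lambda$ is linear with unit eigenvectors $v_1,\dots,v_d$, $v_1$ for the eigenvalue $\lambda$. Let $K_\lambda=\{\sum a_iv_i: a_1>0,\ a_1>|a_i|\ (i\ge2)\}$, let $KR_\lambda$ be a closed convex polyhedral cone generated by finitely many elements of $\mathcal{O}_\lambda$ with $\lambda K_\lambda\subset KR_\lambda\subset K_\lambda$, and $S_\lambda=(\mathcal{O}_\lambda\cap KR_\lambda)\setminus\{0\}$, an additive semigroup generated by finitely many elements $s_1,\dots,s_m$ (viewed as positive real numbers via $\mathbb{Q}(\lambda)\subset\mathbb{R}$). Choose positive integers $N>n_0$ with $\lambda^N\equiv\lambda^{n_0}\pmod{2\mathcal{O}_\lambda}$; put $T=s_1+\dots+s_m$ and $g_k=\lambda^{n_0}s_k+2(T+\lambda s_k)$. Choose an integer $p\ge0$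 so that $M=p(N-n_0)+N$ satisfies $\lambda^Ms_k\in g_k+S_\lambda$ for all $k$; then there are nonnegative integers $e^{(k)}_i$ with $\lambda^Ms_k=\sum_{i=1}^m(2e^{(k)}_i+2)s_i+2\lambda s_k+\lambda^{n_0}s_k$. The star $\ast_{mM}=K_{1,mM}$ has edges $(s_k,i)$, $1\le k\le m$, $1\le i\le M$, oriented from center to tip, of length $\lambda^{i-1}s_k$. The graph map $f_\lambda$ fixes the center, sends $(s_k,i)\mapsto(s_k,i+1)$ for $i<M$, and sends $(s_k,M)$ to the edge path which first traverses $(s_k,1)$ back and forth $e^{(k)}_k+1$ times (i.e. $2e^{(k)}_k+2$ traversals), then, for each $j\ne k$ in some fixed order, traverses $(s_j,1)$ back and forth $e^{(k)}_j+1$ times, then traverses $(s_k,2)$ out and back once, and finally traverses $(s_k,n_0+1)$ once. Split map: prototype graph $P_7$ has vertices $v_0,v_1$ and edges $a,\dots,g$ oriented $v_0\to v_1$ (uppercase = reversed); $\phi_1=\mathrm{id}$ and for $m'\ge0$, $\phi_{3+2m'}$: $a\mapsto aG(aB)^{m'}a$, $b\mapsto bD(bC)^{m'}b$, $c\mapsto cF(cA)^{m'}c$, $d\mapsto aB(aB)^{m'}a$, $e\mapsto cB(aB)^{m'}a$, $f\mapsto aC(aB)^{m'}a$, $g\mapsto bE(bA)^{m'}b$. The split graph replaces each edge $x_I$ of the star by seven parallel edges $a_I,\dots,g_I$; the split map sends $y_I$ to the path obtained from the word $\phi_{\ell}(y)$, $\ell$ the number of edges of $f_\lambda(x_I)$,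 by giving its $t$-th letter the subscript of the $t$-th edge of $f_\lambda(x_I)$. A graph map is mixing if some positive power of its transition matrix (entry $(i,j)$ = number of times edge $i$ occurs in the image path of edge $j$) is positive. *)

(* Defs.v *)
From HB Require Import structures.
From mathcomp Require Import all_boot all_order all_algebra all_field.
Set Implicit Arguments. Unset Strict Implicit. Unset Printing Implicit Defensive.
Import Order.TTheory GRing.Theory Num.Theory.

Definition inQ (lam x : algC) : Prop :=
  exists p : {poly rat}, (x = (map_poly ratr p).[lam])%R.

Definition inO (lam x : algC) : Prop := inQ lam x /\ x \in Aint.

Definition Perron (lam : algC) : Prop :=
  [/\ lam \is Num.real, lam \in Aint &
      forall z : algC, root (minCpoly lam) z -> z != lam -> (`|z| < lam)%R].

(* Star *_{mM}: edge (s_k, i) (1 <= i <= M) is encoded as (k, i-1), with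
   k : 'I_m and i-1 : nat (a valid edge has i-1 < M).
   An edge path is a list of (edge, orientation), true = forward
   (center -> tip).                   *)

Definition sedge (m : nat) := ('I_m * nat)%type.

Definition bf (m : nat) (x : sedge m) (r : nat) : seq (sedge m * bool) :=
  flatten (nseq r [:: (x, true); (x, false)]).

(* the star map f_lambda, determined by m, M, n0, the exponents
   e k i = e^{(k)}_i and, for each k, the fixed order ord k of the j != k. *)
Definition fstar (m M n0 : nat) (e : 'I_m -> 'I_m -> nat)
    (ord : 'I_m -> seq 'I_m) (x : sedge m) : seq (sedge m * bool) :=
  let: (k, i) := x in
  if i.+1 < M then [:: ((k, i.+1), true)]
  else bf (k, 0%N) (e k k).+1
       ++ flatten [seq bf (j, 0%N) (e k j).+1 | j <- ord k]
       ++ [:: ((k, 1%N), true); ((k, 1%N), false); ((k, n0), true)].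

Definition la : 'I_7 := inord 0.
Definition lb : 'I_7 := inord 1.
Definition lc : 'I_7 := inord 2.
Definition ld : 'I_7 := inord 3.
Definition le : 'I_7 := inord 4.
Definition lf : 'I_7 := inord 5.
Definition lg : 'I_7 := inord 6.

(* word  u V (x Z)^{m'} w  (lowercase = forward, uppercase = reversed) *)
Definition pword (u V x Z w : 'I_7) (m' : nat) : seq ('I_7 * bool) :=
  [:: (u, true); (V, false)] ++ flatten (nseq m' [:: (x, true); (Z, false)])
  ++ [:: (w, true)].

Definition phi_odd (m' : nat) (y : 'I_7) : seq ('I_7 * bool) :=
  if y == la then pword la lg la lb la m'
  else if y == lb then pword lb ld lb lc lb m'
  else if y == lc then pword lc lf lc la lc m'
  else if y == ld then pword la lb la lb la m'
  else if y == le then pword lc lb la lb la m'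
  else if y == lf then pword la lc la lb la m'
  else pword lb le lb la lb m'.

(* phi_l : identity for l = 1, phi_{3+2m'} for l = 3 + 2m'
   (only odd l occur in the construction). *)
Definition phi (l : nat) (y : 'I_7) : seq ('I_7 * bool) :=
  if l <= 1 then [:: (y, true)] else phi_odd (l - 3)./2 y.

(* Split map S(f_lambda): the split edge y_I is encoded as (y, I). *)
Definition split_img (m M n0 : nat) (e : 'I_m -> 'I_m -> nat)
    (ord : 'I_m -> seq 'I_m) (y : 'I_7) (I : sedge m)
    : seq (('I_7 * sedge m) * bool) :=
  let P := fstar M n0 e ord I in
  [seq ((wp.1.1, wp.2.1), wp.1.2) | wp <- zip (phi (size P) y) P].

Definition split_edge (m M : nat) := ('I_7 * 'I_m * 'I_M)%type.

Definition se_val (m M : nat) (z : split_edge m M) : 'I_7 * sedge m :=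
  (z.1.1, (z.1.2, nat_of_ord z.2)).

Definition split_trans (m M n0 : nat) (e : 'I_m -> 'I_m -> nat)
    (ord : 'I_m -> seq 'I_m) : 'M[nat]_#|{: split_edge m M}| :=
  \matrix_(i, j)
    let zi := se_val (enum_val i) in
    let zj := se_val (@enum_val _ (mem {: split_edge m M}) j) in
    count (fun q => q.1 == zi) (split_img M n0 e ord zj.1 zj.2).

Definition mixing_mx (n : nat) (T : 'M[nat]_n) : Prop :=
  exists L : nat, 0 < L /\ forall i j, 0 < (T ^+ L)%R i j.

(* Main.v *)
Require Import Defs.
From HB Require Import structures.
From mathcomp Require Import all_boot all_order all_algebra all_field.
Import Order.TTheory GRing.Theory Num.Theory.
From mathcomp Require Import zify.

Section Walk.
Variables (m M n0 : nat) (e : 'I_m -> 'I_m -> nat) (ord : 'I_m -> seq 'I_m).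
Let T := split_trans M n0 e ord.
Definition Wk (n : nat) (x y : split_edge m M) : Prop :=
  0 < (T ^+ n)%R (enum_rank y) (enum_rank x).

Lemma W0 x : Wk 0 x x.
Proof. by rewrite /Wk expr0 mxE eqxx. Qed.

Lemma Wcat n1 n2 x y z : Wk n1 x y -> Wk n2 y z -> Wk (n1 + n2) x z.
Proof.
rewrite /Wk addnC exprD -mulmxE mxE => H1 H2.
rewrite (bigD1 (enum_rank y)) //=.
apply: leq_trans (leq_addr _ _).
by rewrite muln_gt0 H1 H2.
Qed.

Lemma Wstep x y b :
  (se_val y, b) \in split_img M n0 e ord (se_val x).1 (se_val x).2 -> Wk 1 x y.
Proof.
move=> H; rewrite /Wk expr1 /T /split_trans mxE !enum_rankK -has_count.
by apply/hasP; exists (se_val y, b).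
Qed.
End Walk.
Arguments Wstep {m M n0 e ord x y} b.
Arguments Wcat {m M n0 e ord n1 n2 x y z}.
Arguments W0 {m M n0 e ord x}.
Lemma letter_eq i j : i < 7 -> j < 7 -> ((inord i : 'I_7) == inord j) = (i == j).
Proof. by move=> Hi Hj; rewrite -val_eqE /= !inordK. Qed.
Ltac letr := rewrite /phi_odd /la /lb /lc /ld /le /lf /lg ?letter_eq //=.
Definition lU (y : 'I_7) := (nth (la,true) (phi_odd 1 y) 0).1.
Definition lV (y : 'I_7) := (nth (la,true) (phi_odd 1 y) 1).1.
Definition lX (y : 'I_7) := (nth (la,true) (phi_odd 1 y) 2).1.
Lemma L1 : lU la = la. Proof. rewrite /lU. letr. Qed.
Lemma L2 : lX la = la. Proof. rewrite /lX. letr. Qed.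
Lemma L3 : lV la = lg. Proof. rewrite /lV. letr. Qed.
Lemma L4 : lU lg = lb. Proof. rewrite /lU. letr. Qed.
Lemma L5 : lV lg = le. Proof. rewrite /lV. letr. Qed.
Lemma L6 : lV lb = ld. Proof. rewrite /lV. letr. Qed.
Lemma L7 : lU le = lc. Proof. rewrite /lU. letr. Qed.
Lemma L8 : lV lc = lf. Proof. rewrite /lV. letr. Qed.
Lemma L9 : lU ld = la. Proof. rewrite /lU. letr. Qed.
Lemma L10 : lU lf = la. Proof. rewrite /lU. letr. Qed.

Definition lZ (y : 'I_7) := (nth (la,true) (phi_odd 1 y) 3).1.
Definition lW (y : 'I_7) := (nth (la,true) (phi_odd 1 y) 4).1.

Lemma phi_oddE m' y : phi_odd m' y = pword (lU y) (lV y) (lX y) (lZ y) (lW y) m'.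
Proof.
rewrite /lU /lV /lX /lZ /lW /phi_odd; by do 6 (case: ifP => _ //).
Qed.

Lemma flatten_nseqS {A} n (s : seq A) : flatten (nseq n.+1 s) = flatten (nseq n s) ++ s.
Proof. by rewrite -[n.+1]addn1 nseqD flatten_cat /= cats0. Qed.

Definition g2 {A} (c : A) := [:: (c, true); (c, false)].

Lemma bfE m (x : sedge m) r : bf x r = flatten (map g2 (nseq r x)).
Proof. rewrite /bf; by elim: r => //= r ->. Qed.

Lemma flatten_map_flatten {A B} (f : A -> seq B) (ss : seq (seq A)) :
  flatten [seq flatten (map f s) | s <- ss] = flatten (map f (flatten ss)).
Proof. by elim: ss => //= s ss ->; rewrite map_cat flatten_cat. Qed.

Lemma zip_g2 {A B} (p q : A) (L : seq B) :
  zip (flatten (nseq (size L) [:: (p,true); (q,false)])) (flatten (map g2 L))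
  = flatten [seq [:: ((p,true), (c,true)); ((q,false),(c,false))] | c <- L].
Proof. by elim: L => //= c L ->. Qed.

Lemma size_flat_g2 {A} (L : seq A) : size (flatten (map g2 L)) = (size L).*2.
Proof. by elim: L => //= c L ->. Qed.

Lemma size_flat_nseq2 {A} (p q : A) n : size (flatten (nseq n [:: p; q])) = n.*2.
Proof. by elim: n => //= n ->. Qed.

Section Img.
Variables (m M n0 : nat) (e : 'I_m -> 'I_m -> nat) (ord : 'I_m -> seq 'I_m).

Lemma img_up y k i : i.+1 < M ->
  split_img M n0 e ord y (k, i) = [:: ((y, (k, i.+1)), true)].
Proof. move=> H; rewrite /split_img /fstar H. by []. Qed.

Definition Lk k : seq (sedge m) :=
  nseq (e k k) (k, 0) ++ flatten [seq nseq (e k j).+1 (j, 0) | j <- ord k].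

Lemma img_top y k i : ~~ (i.+1 < M) ->
  split_img M n0 e ord y (k, i) =
  [:: ((lU y, (k, 0)), true); ((lV y, (k, 0)), false)] ++
  [seq ((wp.1.1, wp.2.1), wp.1.2) | wp <- 
     flatten [seq [:: ((lX y,true), (c,true)); ((lZ y,false),(c,false))] | c <- Lk k]] ++
  [:: ((lX y, (k, 1)), true); ((lZ y, (k, 1)), false); ((lW y, (k, n0)), true)].
Proof.
move=> H; rewrite /split_img.
have -> : fstar M n0 e ord (k, i)
  = g2 (k,0) ++ flatten (map g2 (Lk k)) ++ [:: (k, 1, true); (k, 1, false); (k, n0, true)].
  rewrite /fstar (negbTE H).
  rewrite /Lk map_cat flatten_cat -flatten_map_flatten -map_comp.
  rewrite bfE /= -catA.
  do 2 congr (_ :: _); congr (_ ++ (_ ++ _)); congr flatten; apply: eq_map => j; by rewrite /= bfE.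
set P := _ ++ _.
have sz : size P = (size (Lk k)).*2 + 5.
  by rewrite /P /= size_cat size_flat_g2 /= !addnS.
rewrite /phi sz ifF; last by rewrite -addnn; lia.
have -> : ((size (Lk k)).*2 + 5 - 3)./2 = (size (Lk k)).+1.
  have -> : (size (Lk k)).*2 + 5 - 3 = (size (Lk k)).+1.*2 by rewrite -!addnn; lia.
  by rewrite doubleK.
rewrite phi_oddE /pword flatten_nseqS /P -!catA zip_cat // zip_cat; last first.
  by rewrite size_flat_g2 size_flat_nseq2.
by rewrite zip_g2 !map_cat.
Qed.
End Img.

Lemma letter_cases (y : 'I_7) :
  y = la \/ y = lb \/ y = lc \/ y = ld \/ y = le \/ y = lf \/ y = lg.
Proof.
have E : forall i (Hi : i < 7), Ordinal Hi = inord i by move=> i Hi; apply: val_inj; rewrite /= inordK.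
rewrite /la /lb /lc /ld /le /lf /lg.
case: y => [[|[|[|[|[|[|[|n]]]]]]] Hn]; rewrite ?E; try tauto; by [].
Qed.

Section Reach.
Variables (m M1 n0 : nat) (e : 'I_m -> 'I_m -> nat) (ord : 'I_m -> seq 'I_m).
Hypothesis M1pos : 0 < M1.
Hypothesis Hord : forall k, perm_eq (ord k) [seq j <- enum 'I_m | j != k].
Local Notation W := (@Wk m M1.+1 n0 e ord).
Definition nd (y : 'I_7) (k : 'I_m) (i : nat) : split_edge m M1.+1 := (y, k, inord i).
Lemma se_nd y k i : i <= M1 -> se_val (nd y k i) = (y, (k, i)).
Proof. by move=> H; rewrite /se_val /nd /= inordK. Qed.

Definition Reach x y := exists n, W n x y.
Lemma Reach_trans x y z : Reach x y -> Reach y z -> Reach x z.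
Proof. by move=> [n1 H1] [n2 H2]; exists (n1 + n2); apply: Wcat H1 H2. Qed.

Lemma W_up y k i j : i <= j -> j <= M1 -> W (j - i) (nd y k i) (nd y k j).
Proof.
move=> Hij; elim: j Hij => [|j IH] Hij Hj.
  by rewrite leqn0 in Hij; rewrite (eqP Hij) subnn; apply: W0.
case: (ltngtP i j.+1) Hij => // [Hi|Hi] _; last by rewrite Hi subnn; apply: W0.
rewrite subSn // -[(j - i).+1]addn1; apply: Wcat (IH Hi (ltnW Hj)) _.
apply: (Wstep true); rewrite se_nd // se_nd; last exact: ltnW Hj.
by rewrite /= img_up // mem_seq1.
Qed.

Lemma top_step y k z k' l b :
  l <= M1 ->
  ((z, (k', l)), b) \in split_img M1.+1 n0 e ord y (k, M1) ->
  Reach (nd y k M1) (nd z k' M1).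
Proof.
move=> Hl Hin; apply: Reach_trans (_ : Reach _ (nd z k' l)) _.
  by exists 1; apply: (Wstep b); rewrite se_nd // se_nd.
by exists (M1 - l); apply: W_up.
Qed.

Lemma stepU y k : Reach (nd y k M1) (nd (lU y) k M1).
Proof. apply: (top_step _ _ _ _ 0 true) => //; rewrite img_top ?ltnn //. by rewrite mem_head. Qed.
Lemma stepV y k : Reach (nd y k M1) (nd (lV y) k M1).
Proof. apply: (top_step _ _ _ _ 0 false) => //; rewrite img_top ?ltnn //. by rewrite inE mem_head orbT. Qed.
Lemma stepX y k j : j != k -> Reach (nd y k M1) (nd (lX y) j M1).
Proof.
move=> Hjk; apply: (top_step _ _ _ _ 0 true) => //; rewrite img_top ?ltnn //.
rewrite !mem_cat; apply/orP; right; apply/orP; left.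
apply/mapP; exists ((lX y, true), ((j, 0), true)) => //.
apply/flatten_mapP; exists (j, 0); last by rewrite mem_head.
rewrite /Lk mem_cat; apply/orP; right.
apply/flatten_mapP; exists j; last by rewrite mem_head.
by rewrite (perm_mem (Hord k)) mem_filter Hjk mem_enum.
Qed.

Lemma top_step0 y k z k' l b :
  l <= M1 ->
  ((z, (k', l)), b) \in split_img M1.+1 n0 e ord y (k, M1) ->
  Reach (nd y k M1) (nd z k' l).
Proof. by move=> Hl Hin; exists 1; apply: (Wstep b); rewrite se_nd // se_nd. Qed.

Lemma loop1 k : W M1 (nd la k M1) (nd la k M1).
Proof.
have H1 : W 1 (nd la k M1) (nd la k 1).
  apply: (Wstep true); rewrite se_nd // se_nd // img_top ?ltnn // L2.
  by rewrite !mem_cat; apply/orP; right; apply/orP; right; rewrite mem_head.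
have := Wcat H1 (W_up la k 1 M1 M1pos (leqnn _)).
by rewrite add1n subn1 prednK.
Qed.

Lemma loop2 k : W M1.+1 (nd la k M1) (nd la k M1).
Proof.
have H1 : W 1 (nd la k M1) (nd la k 0).
  apply: (Wstep true); rewrite se_nd // se_nd // img_top ?ltnn // L1.
  by rewrite mem_head.
have := Wcat H1 (W_up la k 0 M1 (leq0n _) (leqnn _)).
by rewrite add1n subn0.
Qed.

Lemma Reach_refl x : Reach x x.
Proof. by exists 0; apply: W0. Qed.

Lemma to_a k y : Reach (nd y k M1) (nd la k M1).
Proof.
have Rd : Reach (nd ld k M1) (nd la k M1) by have := stepU ld k; rewrite L9.
have Rf : Reach (nd lf k M1) (nd la k M1) by have := stepU lf k; rewrite L10.
have Rb : Reach (nd lb k M1) (nd la k M1) by apply: Reach_trans Rd; have := stepV lb k; rewrite L6.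
have Rc : Reach (nd lc k M1) (nd la k M1) by apply: Reach_trans Rf; have := stepV lc k; rewrite L8.
have Re : Reach (nd le k M1) (nd la k M1) by apply: Reach_trans Rc; have := stepU le k; rewrite L7.
have Rg : Reach (nd lg k M1) (nd la k M1) by apply: Reach_trans Rb; have := stepU lg k; rewrite L4.
by case: (letter_cases y) => [->|[->|[->|[->|[->|[->|->]]]]]] //; apply: Reach_refl.
Qed.

Lemma from_a k y : Reach (nd la k M1) (nd y k M1).
Proof.
have Rg : Reach (nd la k M1) (nd lg k M1) by have := stepV la k; rewrite L3.
have Rb : Reach (nd la k M1) (nd lb k M1) by apply: Reach_trans Rg _; have := stepU lg k; rewrite L4.
have Re : Reach (nd la k M1) (nd le k M1) by apply: Reach_trans Rg _; have := stepV lg k; rewrite L5.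
have Rd : Reach (nd la k M1) (nd ld k M1) by apply: Reach_trans Rb _; have := stepV lb k; rewrite L6.
have Rc : Reach (nd la k M1) (nd lc k M1) by apply: Reach_trans Re _; have := stepU le k; rewrite L7.
have Rf : Reach (nd la k M1) (nd lf k M1) by apply: Reach_trans Rc _; have := stepV lc k; rewrite L8.
by case: (letter_cases y) => [->|[->|[->|[->|[->|[->|->]]]]]] //; apply: Reach_refl.
Qed.

Lemma from_a0 k y : Reach (nd la k M1) (nd y k 0).
Proof.
have HU : forall z, Reach (nd la k M1) (nd (lU z) k 0).
  move=> z; apply: Reach_trans (from_a k z) _.
  by apply: (top_step0 _ _ _ _ 0 true) => //; rewrite img_top ?ltnn // mem_head.
have HV : forall z, Reach (nd la k M1) (nd (lV z) k 0).
  move=> z; apply: Reach_trans (from_a k z) _.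
  by apply: (top_step0 _ _ _ _ 0 false) => //; rewrite img_top ?ltnn // inE mem_head orbT.
case: (letter_cases y) => [->|[->|[->|[->|[->|[->|->]]]]]].
- by have := HU la; rewrite L1.
- by have := HU lg; rewrite L4.
- by have := HU le; rewrite L7.
- by have := HV lb; rewrite L6.
- by have := HV lg; rewrite L5.
- by have := HV lc; rewrite L8.
- by have := HV la; rewrite L3.
Qed.

Lemma cross k k' : Reach (nd la k M1) (nd la k' M1).
Proof.
case: (eqVneq k' k) => [->|ne]; first exact: Reach_refl.
by have := stepX la k k' ne; rewrite L2.
Qed.

Lemma nd_val (x : split_edge m M1.+1) : x = nd x.1.1 x.1.2 x.2.
Proof. by case: x => [[y k] i]; rewrite /nd /= inord_val. Qed.

Lemma to_hub k0 x : Reach x (nd la k0 M1).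
Proof.
rewrite (nd_val x); case: x => [[y k] i] /=.
apply: Reach_trans (cross k k0).
apply: Reach_trans (to_a k y).
by exists (M1 - i); apply: W_up; rewrite -ltnS.
Qed.

Lemma from_hub k0 x : Reach (nd la k0 M1) x.
Proof.
rewrite (nd_val x); case: x => [[y k] i] /=.
apply: Reach_trans (cross k0 k) _.
apply: Reach_trans (from_a0 k y) _.
by exists (i - 0); apply: W_up => //; rewrite -ltnS.
Qed.

Lemma loops k a b : W (a * M1 + b * M1.+1) (nd la k M1) (nd la k M1).
Proof.
elim: b => [|b IHb].
  elim: a => [|a IHa]; first exact: W0.
  have -> : a.+1 * M1 + 0 * M1.+1 = (a * M1 + 0 * M1.+1) + M1 by rewrite mulSn; lia.
  exact: Wcat IHa (loop1 k).
have -> : a * M1 + b.+1 * M1.+1 = (a * M1 + b * M1.+1) + M1.+1 by rewrite (mulSn b); lia.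
exact: Wcat IHb (loop2 k).
Qed.

Lemma loop_large k n : M1 * M1 <= n -> W n (nd la k M1) (nd la k M1).
Proof.
move=> Hn.
have Hr : n %% M1 < M1 by rewrite ltn_mod.
have Hq : n %% M1 <= n %/ M1.
  apply: leq_trans (ltnW Hr) _.
  by rewrite leq_divRL.
have Hm := leq_mul Hq (leqnn M1).
have E : n = (n %/ M1 - n %% M1) * M1 + (n %% M1) * M1.+1.
  rewrite {1}(divn_eq n M1) mulnBl mulnS; lia.
rewrite {1}E; exact: loops.
Qed.

Lemma all_W (k0 : 'I_m) : exists L, 0 < L /\ forall x y, W L x y.
Proof.
have ev : forall x y, exists N, forall L, N <= L -> W L x y.
  move=> x y; case: (to_hub k0 x) => n1 H1; case: (from_hub k0 y) => n2 H2.
  exists (n1 + M1 * M1 + n2) => L HL.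
  have -> : L = n1 + (L - n1 - n2) + n2 by lia.
  apply: Wcat (Wcat H1 (loop_large k0 (L - n1 - n2) _)) H2; lia.
have fin : forall s : seq (split_edge m M1.+1 * split_edge m M1.+1),
    exists N, forall L, N <= L -> forall p, p \in s -> W L p.1 p.2.
  elim=> [|p s [N IH]]; first by exists 0.
  case: (ev p.1 p.2) => N1 H1; exists (maxn N N1) => L HL q.
  rewrite inE => /orP [/eqP ->|Hq].
    by apply: H1; apply: leq_trans HL; apply: leq_maxr.
  by apply: IH => //; apply: leq_trans HL; apply: leq_maxl.
case: (fin (enum {: split_edge m M1.+1 * split_edge m M1.+1})) => N HN.
exists N.+1; split => // x y.
exact: (HN N.+1 (leqnSn N) (x, y) (mem_enum _ _)).
Qed.
End Reach.

Theorem mainTheorem8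
  (lam : algC) (m : nat) (s : 'I_m -> algC) (N n0 p M : nat)
  (e : 'I_m -> 'I_m -> nat) (ord : 'I_m -> seq 'I_m) :
  Perron lam ->
  (forall k, inO lam (s k) /\ (0 < s k)%R) ->
  0 < n0 -> n0 < N ->
  (exists o : algC, inO lam o /\ (lam ^+ N - lam ^+ n0 = 2%:R * o)%R) ->
  M = p * (N - n0) + N ->
  (forall k, (lam ^+ M * s k =
      \sum_(i < m) ((2 * e k i + 2)%:R * s i) + 2%:R * lam * s k
      + lam ^+ n0 * s k)%R) ->
  (forall k, perm_eq (ord k) [seq j <- enum 'I_m | j != k]) ->
  mixing_mx (split_trans M n0 e ord).
Proof.
move=> _ _ Hn0 HN _ HM _ Hord.
have HM2 : 1 < M.
  rewrite HM; apply: leq_trans (leq_addl _ _); exact: leq_ltn_trans Hn0 HN.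
clear HM; case: M HM2 => [|[|M1]] // _.
case: m e ord Hord s => [|m'] e ord Hord s.
  exists 1; split => // i.
  by case: (enum_val i) => [[_ []]].
have [L [HL HW]] := @all_W m'.+1 M1.+1 n0 e ord (ltn0Sn M1) Hord ord0.
exists L; split => // i j.
have := HW (enum_val j) (enum_val i).
by rewrite /Wk !enum_valK.
Qed.
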